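(* In the multi-parameter setting described in the context, for every Kraus representation $\{E_k(\theta)\}$ of the channel and every POVM $\{M_m\}$, $F_M(\theta)\le C_E(\theta)$ as $m\times m$ real symmetric matrices.
   Context: A multi-parameter quantum channel on density matrices on $\mathbb{C}^d$ is $\rho_0\mapsto\sum_kE_k(\theta)\rho_0E_k(\theta)^\dagger$ with $\theta=(\theta^1,\dots,\theta^m)\in\mathbb{R}^m$, Kraus operators differentiable, $\sum_kE_k^\dagger E_k=I$. The input is a fixed pure state $\rho_0=|\psi_0\rangle\langle\psi_0|$ with output $\rho_{out}(\theta)$. Write $X^{(j)}=\partial X/\partial\theta^j$. $C_E(\theta)_{jk}=4\sum_l\mathrm{Re}\,\mathrm{tr}\{E_l^{(j)}\rho_0E_l^{(k)\dagger}\}$. For a POVM $\{M_m\}$ (Hermitian, nonnegative, summing to $I$) with $p(m;\theta)=\mathrm{tr}\{\rho_{out}(\theta)M_m\}$, the Fisher information matrix is $F_M(\theta)_{jk}=\sum_m p(m;\theta)^{-1}\frac{\partial p(m;\theta)}{\partial\theta^j}\frac{\partial p(m;\theta)}{\partial\theta^k}$. *)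

(* Defs.v *)
From HB Require Import structures.
From mathcomp Require Import all_boot all_order all_algebra.
From mathcomp Require Import all_classical all_reals all_analysis.
From mathcomp Require Import complex.
Set Implicit Arguments. Unset Strict Implicit. Unset Printing Implicit Defensive.
Import Order.TTheory GRing.Theory Num.Theory.
Local Open Scope ring_scope.

Definition cmx (R : rcfType) n p (A B : 'M[R]_(n, p)) : 'M[R[i]]_(n, p) :=
  \matrix_(i, j) Complex (A i j) (B i j).

Definition adj (R : rcfType) n p (A : 'M[R[i]]_(n, p)) : 'M[R[i]]_(p, n) :=
  (map_mx (@conjc R) A)^T.

Definition pdv (R : realType) (m : nat) (W : normedModType R)
  (f : 'rV[R]_m -> W) (j : 'I_m) (th : 'rV[R]_m) : W :=
  derive f th (delta_mx 0 j).

Section Channel.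
Variables (R : realType) (d m : nat) (K : finType).
(* Kraus operators E_k(theta) = ER k theta + i EI k theta *)
Variables (ER EI : K -> 'rV[R]_m -> 'M[R]_d).

Definition kraus (k : K) (th : 'rV[R]_m) : 'M[R[i]]_d := cmx (ER k th) (EI k th).

Definition dkraus (k : K) (j : 'I_m) (th : 'rV[R]_m) : 'M[R[i]]_d :=
  cmx (pdv (ER k) j th) (pdv (EI k) j th).

Definition is_kraus_family : Prop :=
  (forall k th, differentiable (ER k) th /\ differentiable (EI k) th) /\
  (forall th, \sum_k adj (kraus k th) *m kraus k th = 1%:M).

Definition rho_pure (psi : 'cV[R[i]]_d) : 'M[R[i]]_d := psi *m adj psi.

Definition rho_out (psi : 'cV[R[i]]_d) (th : 'rV[R]_m) : 'M[R[i]]_d :=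
  \sum_k kraus k th *m rho_pure psi *m adj (kraus k th).

Definition CE_mx (psi : 'cV[R[i]]_d) (th : 'rV[R]_m) : 'M[R]_m :=
  \matrix_(j, k) (4 * \sum_l complex.Re
      (\tr (dkraus l j th *m rho_pure psi *m adj (dkraus l k th)))).

Variable (O : finType).
(* p(o; theta) = tr(rho_out(theta) M_o)  (a real number; we take its real part) *)
Definition prob (psi : 'cV[R[i]]_d) (M : O -> 'M[R[i]]_d) (o : O)
  (th : 'rV[R]_m) : R := complex.Re (\tr (rho_out psi th *m M o)).

(* classical Fisher information matrix; terms with p = 0 contribute 0
   since 0^-1 = 0 in MathComp *)
Definition fisher_mx (psi : 'cV[R[i]]_d) (M : O -> 'M[R[i]]_d)
  (th : 'rV[R]_m) : 'M[R]_m :=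
  \matrix_(j, k) \sum_o ((prob psi M o th)^-1
      * pdv (prob psi M o) j th * pdv (prob psi M o) k th).
End Channel.

Definition is_POVM (R : rcfType) (d : nat) (O : finType)
  (M : O -> 'M[R[i]]_d) : Prop :=
  (forall o, adj (M o) = M o) /\
  (forall o (v : 'cV[R[i]]_d), 0 <= (adj v *m M o *m v) 0 0) /\
  \sum_o M o = 1%:M.

Definition loewner_le (R : realType) (m : nat) (A B : 'M[R]_m) : Prop :=
  forall v : 'cV[R]_m, (v^T *m A *m v) 0 0 <= (v^T *m B *m v) 0 0.

(* Main.v *)
Require Import Defs.
From HB Require Import structures.
From mathcomp Require Import all_boot all_order all_algebra.
From mathcomp Require Import all_classical all_reals all_analysis.
From mathcomp Require Import complex.
From mathcomp Require Import ring lra.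
Import Order.TTheory GRing.Theory Num.Theory.
Local Open Scope ring_scope.
Local Open Scope classical_set_scope.

Section S.
Context {R : realType} {m : nat}.
Local Notation V := 'rV[R]_m.

Lemma isd_coord p q (F : V -> 'M[R]_(p,q)) x v a b :
  derivable F x v -> is_derive x v (fun y => F y a b) (derive F x v a b).
Proof.
move=> dF.
have cv : (fun h : R => h^-1 *: ((F \o shift x) (h *: v) - F x)) @ 0^' --> derive F x v := dF.
have cv2 := cvg_comp _ _ cv (@coord_continuous R p q a b (derive F x v)).
have E : (fun N : 'M[R]_(p,q) => N a b) \o (fun h : R => h^-1 *: ((F \o shift x) (h *: v) - F x))
   = (fun h : R => h^-1 *: (((fun y => F y a b) \o shift x) (h *: v) - F x a b)).
  by apply/funext => h /=; rewrite !mxE.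
rewrite E in cv2.
apply: DeriveDef; first by apply/cvg_ex; exists (derive F x v a b).
rewrite /derive; apply: cvg_lim => //; exact: cv2.
Qed.
Implicit Types (x v : V).

Lemma isdD {x v} {f g : V -> R} {df dg} : is_derive x v f df -> is_derive x v g dg ->
  is_derive x v (fun y => f y + g y) (df + dg).
Proof. move=> H1 H2; exact: (is_deriveD H1 H2). Qed.
Lemma isdB {x v} {f g : V -> R} {df dg} : is_derive x v f df -> is_derive x v g dg ->
  is_derive x v (fun y => f y - g y) (df - dg).
Proof. move=> H1 H2; exact: (is_deriveB H1 H2). Qed.
Lemma isdM {x v} {f g : V -> R} {df dg} : is_derive x v f df -> is_derive x v g dg ->
  is_derive x v (fun y => f y * g y) (df * g x + f x * dg).
Proof.
move=> H1 H2; have := is_deriveM H1 H2.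
move=> H; apply: is_derive_eq H _; by rewrite /GRing.scale /= addrC [g x * _]mulrC.
Qed.
Lemma isdC x v (c : R) : is_derive x v (fun _ => c) 0.
Proof. exact: is_derive_cst. Qed.
Lemma isd_sum x v (I : finType) (h : I -> V -> R) dh :
  (forall i, is_derive x v (h i) (dh i)) ->
  is_derive x v (fun y => \sum_i h i y) (\sum_i dh i).
Proof.
move=> H; rewrite /index_enum; elim: (Finite.enum I) => [|i s IH].
  by under eq_fun do rewrite big_nil; rewrite big_nil; exact: isdC.
under eq_fun do rewrite big_cons; rewrite big_cons; exact: isdD.
Qed.

Definition cisd x v (F : V -> R[i]) (dF : R[i]) :=
  is_derive x v (fun y => complex.Re (F y)) (complex.Re dF) /\ is_derive x v (fun y => complex.Im (F y)) (complex.Im dF).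

Lemma cisdC x v c : cisd x v (fun _ => c) 0.
Proof. by split; apply: isdC. Qed.
Lemma cisdD {x v F G dF dG} : cisd x v F dF -> cisd x v G dG ->
  cisd x v (fun y => F y + G y) (dF + dG).
Proof.
move=> [H1 H2] [H3 H4]; split.
  have -> : (fun y => complex.Re (F y + G y)) = (fun y => complex.Re (F y) + complex.Re (G y)).
    by apply/funext => y; case: (F y) (G y) => [? ?] [? ?].
  by apply: (is_derive_eq (isdD H1 H3)); move: (dF) (dG) => [? ?] [? ?].
have -> : (fun y => complex.Im (F y + G y)) = (fun y => complex.Im (F y) + complex.Im (G y)).
  by apply/funext => y; case: (F y) (G y) => [? ?] [? ?].
by apply: (is_derive_eq (isdD H2 H4)); move: (dF) (dG) => [? ?] [? ?].
Qed.
Lemma cisdM {x v F G dF dG} : cisd x v F dF -> cisd x v G dG ->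
  cisd x v (fun y => F y * G y) (dF * G x + F x * dG).
Proof.
move=> [H1 H2] [H3 H4]; split.
  have -> : (fun y => complex.Re (F y * G y)) = (fun y => complex.Re (F y) * complex.Re (G y) - complex.Im (F y) * complex.Im (G y)).
    by apply/funext => y; case: (F y) (G y) => [? ?] [? ?].
  apply: is_derive_eq (isdB (isdM H1 H3) (isdM H2 H4)) _.
  by move: (dF) (dG) (F x) (G x) => [? ?] [? ?] [? ?] [? ?] /=; ring.
have -> : (fun y => complex.Im (F y * G y)) = (fun y => complex.Re (F y) * complex.Im (G y) + complex.Im (F y) * complex.Re (G y)).
  by apply/funext => y; case: (F y) (G y) => [? ?] [? ?].
apply: is_derive_eq (isdD (isdM H1 H4) (isdM H2 H3)) _.
by move: (dF) (dG) (F x) (G x) => [? ?] [? ?] [? ?] [? ?] /=; ring.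
Qed.
Lemma cisdJ {x v F dF} : cisd x v F dF -> cisd x v (fun y => (F y)^*%C) (dF^*%C).
Proof.
move=> [H1 H2]; split.
  have -> : (fun y => complex.Re ((F y)^*%C)) = (fun y => complex.Re (F y)).
    by apply/funext => y; case: (F y).
  by apply: (is_derive_eq H1); move: (dF) => [? ?].
have -> : (fun y => complex.Im ((F y)^*%C)) = (fun y => - complex.Im (F y)).
  by apply/funext => y; case: (F y).
by apply: (is_derive_eq (is_deriveN H2)); move: (dF) => [? ?].
Qed.
Lemma cisd_sum x v (I : finType) (h : I -> V -> R[i]) dh :
  (forall i, cisd x v (h i) (dh i)) ->
  cisd x v (fun y => \sum_i h i y) (\sum_i dh i).
Proof.
move=> H; rewrite /index_enum; elim: (Finite.enum I) => [|i s IH].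
  by under eq_fun do rewrite big_nil; rewrite big_nil; exact: cisdC.
under eq_fun do rewrite big_cons; rewrite big_cons; exact: cisdD.
Qed.
Lemma cisd_eq {x v F dF dF'} : cisd x v F dF -> dF = dF' -> cisd x v F dF'.
Proof. by move=> ? <-. Qed.

Definition mcisd p q x v (F : V -> 'M[R[i]]_(p,q)) (dF : 'M[R[i]]_(p,q)) :=
  forall r c, cisd x v (fun y => F y r c) (dF r c).
Arguments mcisd {p q}.

Lemma mcisd_eq {p q x v} {F : V -> 'M[R[i]]_(p,q)} {dF dF'} : mcisd x v F dF -> dF = dF' -> mcisd x v F dF'.
Proof. by move=> ? <-. Qed.

Lemma mcisdC p q x v (C : 'M[R[i]]_(p,q)) : mcisd x v (fun _ => C) 0.
Proof. by move=> r c; apply: (cisd_eq (cisdC _ _ _)); rewrite mxE. Qed.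

Lemma mcisdD {p q x v} {F G : V -> 'M[R[i]]_(p,q)} {dF dG} : mcisd x v F dF -> mcisd x v G dG ->
  mcisd x v (fun y => F y + G y) (dF + dG).
Proof.
move=> H1 H2 r c; rewrite mxE.
have -> : (fun y => (F y + G y) r c) = (fun y => F y r c + G y r c).
  by apply/funext => y; rewrite mxE.
exact: cisdD.
Qed.

Lemma mcisd_sum p q x v (I : finType) (h : I -> V -> 'M[R[i]]_(p,q)) dh :
  (forall i, mcisd x v (h i) (dh i)) ->
  mcisd x v (fun y => \sum_i h i y) (\sum_i dh i).
Proof.
move=> H; rewrite /index_enum; elim: (Finite.enum I) => [|i s IH].
  by under eq_fun do rewrite big_nil; rewrite big_nil; exact: mcisdC.
under eq_fun do rewrite big_cons; rewrite big_cons; exact: mcisdD.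
Qed.

Lemma mcisdM {p q s x v} {F : V -> 'M[R[i]]_(p,q)} {G : V -> 'M[R[i]]_(q,s)} {dF dG} : mcisd x v F dF -> mcisd x v G dG ->
  mcisd x v (fun y => F y *m G y) (dF *m G x + F x *m dG).
Proof.
move=> H1 H2 r c.
have -> : (fun y => (F y *m G y) r c) = (fun y => \sum_k F y r k * G y k c).
  by apply/funext => y; rewrite mxE.
apply: (cisd_eq (@cisd_sum _ _ _ (fun k y => F y r k * G y k c) _ (fun k => cisdM (H1 r k) (H2 k c)))).
by rewrite !mxE big_split.
Qed.

Lemma mcisd_adj {p q x v} {F : V -> 'M[R[i]]_(p,q)} {dF} : mcisd x v F dF ->
  mcisd x v (fun y => adj (F y)) (adj dF).
Proof.
move=> H r c.
have -> : (fun y => adj (F y) r c) = (fun y => (F y c r)^*%C).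
  by apply/funext => y; rewrite /adj !mxE.
by apply: (cisd_eq (cisdJ (H c r))); rewrite /adj !mxE.
Qed.

Lemma cisd_tr {p x v} {F : V -> 'M[R[i]]_p} {dF} : mcisd x v F dF -> cisd x v (fun y => \tr (F y)) (\tr dF).
Proof. by move=> H; apply: (@cisd_sum _ _ _ (fun i y => F y i i) _ (fun i => H i i)). Qed.
End S.
Arguments cisd {R m}.
Arguments mcisd {R m p q}.

Lemma mcisd_kraus (R : realType) (d m : nat) (K : finType)
  (ER EI : K -> 'rV[R]_m -> 'M[R]_d) l th v :
  differentiable (ER l) th -> differentiable (EI l) th ->
  mcisd th v (kraus ER EI l) (cmx (derive (ER l) th v) (derive (EI l) th v)).
Proof.
move=> D1 D2 r c; split.
  have -> : (fun y => complex.Re (kraus ER EI l y r c)) = (fun y => ER l y r c).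
    by apply/funext => y; rewrite /kraus /cmx mxE.
  by rewrite /cmx mxE /=; apply: isd_coord; apply: diff_derivable.
have -> : (fun y => complex.Im (kraus ER EI l y r c)) = (fun y => EI l y r c).
  by apply/funext => y; rewrite /kraus /cmx mxE.
by rewrite /cmx mxE /=; apply: isd_coord; apply: diff_derivable.
Qed.

Set Implicit Arguments. Unset Strict Implicit. Unset Printing Implicit Defensive.
Section Alg.
Variable (R : realType).
Definition rc (c : R) : R[i] := Complex c 0.
Definition ip d (N : 'M[R[i]]_d) (u w : 'cV[R[i]]_d) : R[i] := (adj u *m N *m w) 0 0.
Definition Sf d (N : 'M[R[i]]_d) (u w : 'cV[R[i]]_d) : R := complex.Re (ip N u w).

Lemma ReD (x y : R[i]) : complex.Re (x + y) = complex.Re x + complex.Re y.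
Proof. by case: x y => [? ?] [? ?]. Qed.
Lemma Re_sum (I : finType) (f : I -> R[i]) :
  complex.Re (\sum_i f i) = \sum_i complex.Re (f i).
Proof. by apply: (big_morph _ ReD). Qed.
Lemma Re_rc (c : R) (z : R[i]) : complex.Re (rc c * z) = c * complex.Re z.
Proof. by case: z => [? ?] /=; ring. Qed.
Lemma Re_conj (z : R[i]) : complex.Re (z^*%C) = complex.Re z.
Proof. by case: z. Qed.
Lemma conj_rc (c : R) : (rc c)^*%C = rc c.
Proof. by rewrite /rc /= oppr0. Qed.

Lemma adjM p q s (A : 'M[R[i]]_(p,q)) (B : 'M[R[i]]_(q,s)) : adj (A *m B) = adj B *m adj A.
Proof. by rewrite /adj map_mxM trmx_mul. Qed.
Lemma adjD p q (A B : 'M[R[i]]_(p,q)) : adj (A + B) = adj A + adj B.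
Proof. by rewrite /adj map_mxD linearD. Qed.
Lemma adjZ p q c (A : 'M[R[i]]_(p,q)) : adj (c *: A) = c^*%C *: adj A.
Proof. by rewrite /adj map_mxZ linearZ. Qed.
Lemma adjK p q (A : 'M[R[i]]_(p,q)) : adj (adj A) = A.
Proof. by apply/matrixP => r c; rewrite /adj !mxE conjcK. Qed.
Lemma adj_sum p q (I : finType) (f : I -> 'M[R[i]]_(p,q)) : adj (\sum_i f i) = \sum_i adj (f i).
Proof. apply: (big_morph _ (@adjD p q)); by rewrite /adj map_mx0 trmx0. Qed.

Lemma ip_conj d (N : 'M[R[i]]_d) u w : (ip N u w)^*%C = ip (adj N) w u.
Proof.
rewrite /ip; have -> : ((adj u *m N *m w) 0 0)^*%C = adj (adj u *m N *m w) 0 0.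
  by rewrite /adj !mxE.
by rewrite !adjM adjK mulmxA.
Qed.
Lemma Sf_sym d (N : 'M[R[i]]_d) u w : adj N = N -> Sf N u w = Sf N w u.
Proof. by move=> HN; rewrite /Sf -Re_conj ip_conj HN. Qed.

Lemma ip_sumr d (N : 'M[R[i]]_d) u (I : finType) (f : I -> 'cV[R[i]]_d) :
  ip N u (\sum_i f i) = \sum_i ip N u (f i).
Proof. by rewrite /ip mulmx_sumr summxE. Qed.
Lemma ip_suml d (N : 'M[R[i]]_d) w (I : finType) (f : I -> 'cV[R[i]]_d) :
  ip N (\sum_i f i) w = \sum_i ip N (f i) w.
Proof. by rewrite /ip adj_sum !mulmx_suml summxE. Qed.
Lemma ip_sumN d u w (I : finType) (f : I -> 'M[R[i]]_d) :
  ip (\sum_i f i) u w = \sum_i ip (f i) u w.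
Proof. by rewrite /ip mulmx_sumr mulmx_suml summxE. Qed.
Lemma ip_Zr d (N : 'M[R[i]]_d) u c w : ip N u (c *: w) = c * ip N u w.
Proof. by rewrite /ip -scalemxAr mxE. Qed.
Lemma ip_Zl d (N : 'M[R[i]]_d) u c w : ip N (c *: u) w = c^*%C * ip N u w.
Proof. by rewrite /ip adjZ -!scalemxAl mxE. Qed.
Lemma ip_Dr d (N : 'M[R[i]]_d) u w1 w2 : ip N u (w1 + w2) = ip N u w1 + ip N u w2.
Proof. by rewrite /ip mulmxDr mxE. Qed.
Lemma ip_Dl d (N : 'M[R[i]]_d) u1 u2 w : ip N (u1 + u2) w = ip N u1 w + ip N u2 w.
Proof. by rewrite /ip adjD !mulmxDl mxE. Qed.

Lemma Sf_sumr d (N : 'M[R[i]]_d) u (I : finType) (c : I -> R) (f : I -> 'cV[R[i]]_d) :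
  Sf N u (\sum_i rc (c i) *: f i) = \sum_i c i * Sf N u (f i).
Proof. by rewrite /Sf ip_sumr Re_sum; apply: eq_bigr => i _; rewrite ip_Zr Re_rc. Qed.
Lemma Sf_suml d (N : 'M[R[i]]_d) w (I : finType) (c : I -> R) (f : I -> 'cV[R[i]]_d) :
  Sf N (\sum_i rc (c i) *: f i) w = \sum_i c i * Sf N (f i) w.
Proof.
by rewrite /Sf ip_suml Re_sum; apply: eq_bigr => i _; rewrite ip_Zl conj_rc Re_rc.
Qed.

Lemma tr_ip d (A B : 'M[R[i]]_d) (psi : 'cV[R[i]]_d) (N : 'M[R[i]]_d) :
  \tr (A *m rho_pure psi *m adj B *m N) = ip N (B *m psi) (A *m psi).
Proof.
rewrite /rho_pure /ip !mulmxA -[A *m psi *m adj psi *m adj B *m N]mulmxA.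
rewrite -[A *m psi *m adj psi *m _]mulmxA mxtrace_mulC adjM.
by rewrite /mxtrace big_ord1 !mulmxA mxE.
Qed.
Lemma Sf_quad d (N : 'M[R[i]]_d) (s : R) u w : adj N = N ->
  Sf N (rc s *: u + w) (rc s *: u + w) = s * s * Sf N u u + 2 * s * Sf N u w + Sf N w w.
Proof.
move=> HN; have Hs := Sf_sym u w HN.
rewrite /Sf in Hs *; rewrite !ip_Dl !ip_Dr !ip_Zl !ip_Zr !conj_rc !ReD !Re_rc Hs.
lra.
Qed.

Lemma key d (L : finType) (N : 'M[R[i]]_d) (a b : L -> 'cV[R[i]]_d) :
  adj N = N -> (forall u, 0 <= Sf N u u) ->
  (\sum_l Sf N (a l) (a l))^-1 * (2 * \sum_l Sf N (a l) (b l))^+2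
    <= 4 * \sum_l Sf N (b l) (b l).
Proof.
move=> HN Hpos.
set P := \sum_l Sf N (a l) (a l); set Q := \sum_l Sf N (a l) (b l).
set S := \sum_l Sf N (b l) (b l).
have quad s : 0 <= s * s * P + 2 * s * Q + S.
  have : 0 <= \sum_l Sf N (rc s *: a l + b l) (rc s *: a l + b l).
    by apply: sumr_ge0 => l _.
  under eq_bigr do rewrite Sf_quad //.
  by rewrite !big_split /= -!mulr_sumr.
have P0 : 0 <= P by apply: sumr_ge0.
have S0 : 0 <= S by apply: sumr_ge0.
have [->|Pn0] := eqVneq P 0; first by rewrite invr0 mul0r; lra.
have PV : P * P^-1 = 1 by rewrite mulfV.
have := quad (- (Q * P^-1)).
have -> : - (Q * P^-1) * - (Q * P^-1) * P = Q * Q * P^-1.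
  by rewrite mulrNN; field.
move=> h.
have -> : P^-1 * (2 * Q) ^+ 2 = 4 * (Q * Q * P^-1) by rewrite expr2; ring.
nra.
Qed.
Lemma qf_fisher m (O : finType) (c : O -> R) (g : O -> 'I_m -> R) (w : 'cV[R]_m) :
  (w^T *m (\matrix_(j,k) \sum_o c o * g o j * g o k) *m w) 0 0
  = \sum_o c o * (\sum_j w j 0 * g o j)^+2.
Proof.
rewrite mxE.
transitivity (\sum_k \sum_j \sum_o c o * (w j 0 * g o j) * (w k 0 * g o k)).
  apply: eq_bigr => k _; rewrite !mxE mulr_suml; apply: eq_bigr => j _.
  rewrite !mxE mulr_sumr mulr_suml; apply: eq_bigr => o _; ring.
rewrite exchange_big /=; under eq_bigr do rewrite exchange_big /=.
rewrite exchange_big /=; apply: eq_bigr => o _.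
rewrite expr2 mulr_suml mulr_sumr; apply: eq_bigr => j _.
rewrite mulr_sumr mulr_sumr; apply: eq_bigr => k _; ring.
Qed.
Lemma qf_C m (L : finType) d (N : 'M[R[i]]_d) (f : L -> 'I_m -> 'cV[R[i]]_d) (w : 'cV[R]_m) :
  (w^T *m (\matrix_(j,k) (4 * \sum_l Sf N (f l k) (f l j))) *m w) 0 0
  = 4 * \sum_l Sf N (\sum_k rc (w k 0) *: f l k) (\sum_j rc (w j 0) *: f l j).
Proof.
rewrite mxE.
transitivity (\sum_k \sum_j \sum_l 4 * (w k 0 * (w j 0 * Sf N (f l k) (f l j)))).
  apply: eq_bigr => k _; rewrite !mxE mulr_suml; apply: eq_bigr => j _.
  rewrite !mxE mulr_sumr mulr_sumr mulr_suml; apply: eq_bigr => l _; ring.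
rewrite mulr_sumr exchange_big /=; under eq_bigr do rewrite exchange_big /=.
rewrite exchange_big /=; apply: eq_bigr => l _; rewrite exchange_big /=.
rewrite Sf_suml mulr_sumr; apply: eq_bigr => k _.
rewrite Sf_sumr mulr_sumr mulr_sumr; apply: eq_bigr => j _; ring.
Qed.

Lemma Sf_ge0 d (N : 'M[R[i]]_d) : (forall v : 'cV[R[i]]_d, 0 <= (adj v *m N *m v) 0 0) ->
  forall u, 0 <= Sf N u u.
Proof. by move=> H u; have := H u; rewrite lecE => /andP[_]. Qed.
End Alg.

Unset Implicit Arguments.
Lemma tr_sum (R : comRingType) n (I : finType) (f : I -> 'M[R]_n) :
  \tr (\sum_i f i) = \sum_i \tr (f i).
Proof. by apply: big_morph; [exact: mxtraceD | exact: mxtrace0]. Qed.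

Theorem lemma14 (R : realType) (d m : nat) (K O : finType)
  (ER EI : K -> 'rV[R]_m -> 'M[R]_d) (psi : 'cV[R[i]]_d)
  (M : O -> 'M[R[i]]_d) (th : 'rV[R]_m) :
  is_kraus_family ER EI ->
  (adj psi *m psi) 0 0 = 1 ->
  is_POVM M ->
  loewner_le (fisher_mx ER EI psi M th) (CE_mx ER EI psi th).
Proof.
move=> [Hdiff _] _ [Hherm [Hpsd HM1]] w.
pose a l := kraus ER EI l th *m psi.
pose da l j := dkraus ER EI l j th *m psi.
have Hprob o : prob ER EI psi M o th = \sum_l Sf (M o) (a l) (a l).
  rewrite /prob /rho_out mulmx_suml tr_sum Re_sum.
  by apply: eq_bigr => l _; rewrite tr_ip.
have Hder o j : pdv (prob ER EI psi M o) j th = \sum_l 2 * Sf (M o) (a l) (da l j).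
  have Hk l : mcisd th (delta_mx 0 j) (kraus ER EI l) (dkraus ER EI l j th).
    by apply: mcisd_kraus; [exact: (Hdiff l th).1 | exact: (Hdiff l th).2].
  have Hr := @mcisd_sum _ _ _ _ _ _ K
    (fun l y => kraus ER EI l y *m rho_pure psi *m adj (kraus ER EI l y)) _
    (fun l => mcisdM (mcisdM (Hk l) (mcisdC _ _ _ _ (rho_pure psi))) (mcisd_adj (Hk l))).
  have Hp := cisd_tr (mcisdM Hr (mcisdC _ _ _ _ (M o))).
  apply: (eq_trans (@derive_val _ _ _ _ _ _ _ Hp.1)).
  rewrite !mulmx0 !addr0 mulmx_suml tr_sum Re_sum.
  apply: eq_bigr => l _.
  rewrite ?mulmx0 ?addr0 mulmxDl mxtraceD ReD !tr_ip.
  rewrite -/(Sf _ _ _) -/(Sf _ _ _) (Sf_sym _ _ (Hherm o)); ring.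
pose b l := \sum_j rc (w j 0) *: da l j.
have HC : CE_mx ER EI psi th = \matrix_(j,k) (4 * \sum_l Sf 1%:M (da l k) (da l j)).
  apply/matrixP => j k; rewrite !mxE; congr (_ * _); apply: eq_bigr => l _.
  by rewrite -[X in \tr X]mulmx1 tr_ip.
rewrite HC qf_C /fisher_mx qf_fisher.
have Hg o : \sum_j w j 0 * pdv (prob ER EI psi M o) j th = 2 * \sum_l Sf (M o) (a l) (b l).
  under eq_bigr do rewrite Hder.
  rewrite /b; under [X in _ = 2 * X]eq_bigr do rewrite Sf_sumr.
  rewrite exchange_big mulr_sumr; apply: eq_bigr => j _.
  rewrite !mulr_sumr; apply: eq_bigr => l _; ring.
apply: (@le_trans _ _ (\sum_o 4 * \sum_l Sf (M o) (b l) (b l))).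
  apply: ler_sum => o _; rewrite Hprob Hg; apply: key => //; exact: Sf_ge0.
rewrite -mulr_sumr exchange_big /=; rewrite le_eqVlt; apply/orP; left; apply/eqP; congr (_ * _); apply: eq_bigr => l _.
by rewrite -HM1 /Sf ip_sumN Re_sum.
Qed.
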